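(* For a tripos $\mathcal{P}$ the following are equivalent: (i) $\mathcal{P}$ is equivalent to the relative realizability tripos over some relative PCA; (ii) $\mathcal{P}$ has enough $\exists$-prime predicates, and the indexed sub-preorder $\mathsf{prim}(\mathcal{P})$ of $\exists$-prime predicates has finite meets (in each fiber, preserved by reindexing) and a discrete generic predicate.
   Context: An indexed preorder is a pseudofunctor $\mathcal{P}:\mathsf{Set}^{op}\to\mathsf{Ord}$, $u^*=\mathcal{P}(u)$; equivalence is in the locally ordered category of indexed preorders and pseudonatural transformations. A generic predicate is some $\iota\in\mathcal{P}(C)$ with every $\varphi\in\mathcal{P}(B)$ isomorphic to $f^*\iota$ for some $f:B\to C$. A tripos is an indexed preorder whose fibers are Heyting preorders (finite meets and implication right adjoint to $-\wedge a$), preserved by reindexing, in which every $u^*$ has a right adjoint $\forall_u$ satisfying Beck–Chevalley for pullbacks in $\mathsf{Set}$, and which has a generic predicate; a tripos also has existential quantification, i.e. left adjoints $\exists_u\dashv u^*$ satisfying Beck–Chevalley. A predicate $\pi\in\mathcal{P}(I)$ is $\exists$-prime if for all $I\xleftarrow{u}J\xleftarrow{v}K$ and $\varphi\in\mathcal{P}(K)$ with $u^*\pi\le\exists_v\varphi$ there is $s:J\to K$ with $v\circ s=\mathrm{id}_J$ and $u^*\pi\le s^*\varphi$; $\mathcal{P}$ has enough $\exists$-primes if every predicate is isomorphic to $\exists_u\pi$ for some $\exists$-prime $\pi$. A predicate $\delta\in\mathcal{A}(I)$ is discrete if for every surjection $e:K\to J$, function $f:K\to I$ and $\varphi\in\mathcal{A}(J)$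 with $e^*\varphi\le f^*\delta$, there is $g:J\to I$ with $g\circ e=f$. A relative PCA is a triple $(A,\cdot,A_\#)$ where $\cdot:A\times A\rightharpoonup A$ is a partial binary operation (application, associating to the left) and $A_\#\subseteq A$ is closed under application whenever defined and contains elements $\mathsf{k},\mathsf{s}$ with, for all $a,b,c\in A$: $\mathsf{k}\cdot a\cdot b$ defined and equal to $a$; $\mathsf{s}\cdot a\cdot b$ defined; $\mathsf{s}\cdot a\cdot b\cdot c$ defined if and only if $a\cdot c\cdot(b\cdot c)$ is defined, in which case they are equal. Its relative realizability tripos is the indexed preorder $I\mapsto((PA)^I,\le)$, reindexing by precomposition, where $\varphi\le\psi$ iff there exists $e\in A_\#$ such that for all $i\in I$ and $a\in\varphi(i)$, $e\cdot a$ is defined and $e\cdot a\in\psi(i)$. *)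

(* Defs.v *)
Set Implicit Arguments.

(** * Indexed preorders (data part of a pseudofunctor Set^op -> Ord) *)
Record IdxPreord : Type := {
  ipred : Type -> Type;
  ile : forall I : Type, ipred I -> ipred I -> Prop;
  ireidx : forall I J : Type, (J -> I) -> ipred I -> ipred J
}.
Arguments ile {_ _} _ _.
Arguments ireidx {_ _ _} _ _.

Section IP.
Variable P : IdxPreord.

Definition iiso {I} (a b : ipred P I) : Prop := ile a b /\ ile b a.

(** The laws making the data a pseudofunctor into preorders (in the locally
    ordered setting, coherence conditions are automatic). *)
Definition indexed_preorder : Prop :=
  (forall I (a : ipred P I), ile a a) /\
  (forall I (a b c : ipred P I), ile a b -> ile b c -> ile a c) /\
  (forall I J (u : J -> I) (a b : ipred P I), ile a b -> ile (ireidx u a) (ireidx u b)) /\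
  (forall I (a : ipred P I), iiso (ireidx (fun i : I => i) a) a) /\
  (forall I J K (u : J -> I) (v : K -> J) (a : ipred P I),
      iiso (ireidx (fun k => u (v k)) a) (ireidx v (ireidx u a))).

Definition is_top {I} (t : ipred P I) : Prop := forall a, ile a t.
Definition is_meet {I} (a b m : ipred P I) : Prop :=
  ile m a /\ ile m b /\ forall x, ile x a -> ile x b -> ile x m.
Definition is_imp {I} (a b c : ipred P I) : Prop :=
  forall x m, is_meet x a m -> (ile x c <-> ile m b).

Definition is_forall {I J} (u : J -> I) (phi : ipred P J) (psi : ipred P I) : Prop :=
  forall chi : ipred P I, ile (ireidx u chi) phi <-> ile chi psi.
Definition is_exists {I J} (u : J -> I) (phi : ipred P J) (psi : ipred P I) : Prop :=
  forall chi : ipred P I, ile psi chi <-> ile phi (ireidx u chi).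

End IP.
Arguments iiso {P I}.
Arguments is_top {P I}.
Arguments is_meet {P I}.
Arguments is_imp {P I}.
Arguments is_forall {P I J}.
Arguments is_exists {P I J}.

(** Pullback squares in Set:
       J' --f'--> J
       |u'        |u
       v          v
       I' --f---> I            *)
Definition is_pullback {I I' J J' : Type} (f : I' -> I) (u : J -> I)
  (f' : J' -> J) (u' : J' -> I') : Prop :=
  (forall x, f (u' x) = u (f' x)) /\
  (forall i j, f i = u j -> exists x, (u' x = i /\ f' x = j) /\
      forall y, u' y = i /\ f' y = j -> y = x).

Section Tripos.
Variable P : IdxPreord.

Definition beck_chevalley_forall : Prop :=
  forall (I I' J J' : Type) (f : I' -> I) (u : J -> I) (f' : J' -> J) (u' : J' -> I'),
    is_pullback f u f' u' ->
    forall (phi : ipred P J) (psi : ipred P I),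
      is_forall u phi psi -> is_forall u' (ireidx f' phi) (ireidx f psi).

Definition beck_chevalley_exists : Prop :=
  forall (I I' J J' : Type) (f : I' -> I) (u : J -> I) (f' : J' -> J) (u' : J' -> I'),
    is_pullback f u f' u' ->
    forall (phi : ipred P J) (psi : ipred P I),
      is_exists u phi psi -> is_exists u' (ireidx f' phi) (ireidx f psi).

Definition has_generic : Prop :=
  exists (C : Type) (iota : ipred P C),
    forall (B : Type) (phi : ipred P B), exists f : B -> C, iiso phi (ireidx f iota).

Definition tripos : Prop :=
  indexed_preorder P /\
  (forall I, exists t : ipred P I, is_top t) /\
  (forall I J (u : J -> I) (t : ipred P I), is_top t -> is_top (ireidx u t)) /\
  (forall I (a b : ipred P I), exists m, is_meet a b m) /\
  (forall I J (u : J -> I) (a b m : ipred P I),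
      is_meet a b m -> is_meet (ireidx u a) (ireidx u b) (ireidx u m)) /\
  (forall I (a b : ipred P I), exists c, is_imp a b c) /\
  (forall I J (u : J -> I) (a b c : ipred P I),
      is_imp a b c -> is_imp (ireidx u a) (ireidx u b) (ireidx u c)) /\
  (forall I J (u : J -> I) (phi : ipred P J), exists psi, is_forall u phi psi) /\
  beck_chevalley_forall /\
  has_generic.

Definition eprime {I : Type} (pi : ipred P I) : Prop :=
  forall (J K : Type) (u : J -> I) (v : K -> J) (phi : ipred P K) (psi : ipred P J),
    is_exists v phi psi ->
    ile (ireidx u pi) psi ->
    exists s : J -> K, (forall j, v (s j) = j) /\ ile (ireidx u pi) (ireidx s phi).

Definition enough_eprimes : Prop :=
  forall (I : Type) (phi : ipred P I),
    exists (J : Type) (u : J -> I) (pi : ipred P J), eprime pi /\ is_exists u pi phi.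

(** Notions for an indexed sub-preorder given by a predicate S on each fibre
    (with the induced order and reindexing). *)
Section Sub.
Variable S : forall {I : Type}, ipred P I -> Prop.

Definition is_top_in {I} (t : ipred P I) : Prop :=
  S t /\ forall a, S a -> ile a t.
Definition is_meet_in {I} (a b m : ipred P I) : Prop :=
  S m /\ ile m a /\ ile m b /\ forall x, S x -> ile x a -> ile x b -> ile x m.

Definition sub_finite_meets : Prop :=
  (forall I, exists t : ipred P I, is_top_in t) /\
  (forall I J (u : J -> I) (t : ipred P I), is_top_in t -> is_top_in (ireidx u t)) /\
  (forall I (a b : ipred P I), S a -> S b -> exists m, is_meet_in a b m) /\
  (forall I J (u : J -> I) (a b m : ipred P I), S a -> S b ->
      is_meet_in a b m -> is_meet_in (ireidx u a) (ireidx u b) (ireidx u m)).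

Definition discrete_in {I} (delta : ipred P I) : Prop :=
  forall (K J : Type) (e : K -> J) (f : K -> I) (phi : ipred P J),
    (forall j, exists k, e k = j) ->
    S phi ->
    ile (ireidx e phi) (ireidx f delta) ->
    exists g : J -> I, forall k, g (e k) = f k.

Definition has_discrete_generic_in : Prop :=
  exists (C : Type) (delta : ipred P C),
    S delta /\
    (forall (B : Type) (phi : ipred P B), S phi -> exists f : B -> C, iiso phi (ireidx f delta)) /\
    discrete_in delta.
End Sub.

End Tripos.
Arguments eprime {P I}.
Arguments is_top_in {P} S {I}.
Arguments is_meet_in {P} S {I}.
Arguments sub_finite_meets {P} S.
Arguments discrete_in {P} S {I}.
Arguments has_discrete_generic_in {P} S.

(** Equivalence of indexed preorders (pseudonatural transformations,
    locally ordered 2-category) *)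
Definition pseudonatural {P Q : IdxPreord} (F : forall I, ipred P I -> ipred Q I) : Prop :=
  (forall I (a b : ipred P I), ile a b -> ile (F I a) (F I b)) /\
  (forall I J (u : J -> I) (a : ipred P I), iiso (F J (ireidx u a)) (ireidx u (F I a))).

Definition ip_equivalent (P Q : IdxPreord) : Prop :=
  exists (F : forall I, ipred P I -> ipred Q I) (G : forall I, ipred Q I -> ipred P I),
    pseudonatural F /\ pseudonatural G /\
    (forall I (a : ipred P I), iiso (G I (F I a)) a) /\
    (forall I (b : ipred Q I), iiso (F I (G I b)) b).

Definition oapp {A : Type} (app : A -> A -> option A) (x y : option A) : option A :=
  match x, y with Some a, Some b => app a b | _, _ => None end.

Definition rel_pca (A : Type) (app : A -> A -> option A) (Ash : A -> Prop) : Prop :=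
  (forall a b c, Ash a -> Ash b -> app a b = Some c -> Ash c) /\
  exists k s, Ash k /\ Ash s /\
    (forall a b : A, oapp app (oapp app (Some k) (Some a)) (Some b) = Some a) /\
    (forall a b : A, oapp app (oapp app (Some s) (Some a)) (Some b) <> None) /\
    (forall a b c : A,
        oapp app (oapp app (oapp app (Some s) (Some a)) (Some b)) (Some c) =
        oapp app (oapp app (Some a) (Some c)) (oapp app (Some b) (Some c))).

Definition rt_le (A : Type) (app : A -> A -> option A) (Ash : A -> Prop)
  (I : Type) (phi psi : I -> A -> Prop) : Prop :=
  exists e, Ash e /\ forall (i : I) (a : A), phi i a -> exists b, app e a = Some b /\ psi i b.

Definition rel_real_tripos (A : Type) (app : A -> A -> option A) (Ash : A -> Prop)
  : IdxPreord :=
  {| ipred := fun I => I -> A -> Prop;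
     ile := rt_le app Ash;
     ireidx := fun I J (u : J -> I) (phi : I -> A -> Prop) => fun j => phi (u j) |}.

(* Main.v *)
Require Import Defs.
From Stdlib Require Import Classical ClassicalEpsilon FunctionalExtensionality PropExtensionality ProofIrrelevance.

Existing Class indexed_preorder.
Section Pre.
Context {P : IdxPreord} {HP : indexed_preorder P}.

Lemma le_refl {I} (a : ipred P I) : ile a a.
Proof. destruct HP as [H _]; apply H. Qed.
Lemma le_trans {I} (a b c : ipred P I) : ile a b -> ile b c -> ile a c.
Proof. destruct HP as [_ [H _]]; apply H. Qed.
Lemma rx_mono {I J} (u : J -> I) (a b : ipred P I) : ile a b -> ile (ireidx u a) (ireidx u b).
Proof. destruct HP as [_ [_ [H _]]]; apply H. Qed.
Lemma rx_idw {I} (w : I -> I) (a : ipred P I) : (forall i, w i = i) -> iiso (ireidx w a) a.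
Proof.
  intros Hw. assert (w = fun i => i) by (apply functional_extensionality; auto). subst.
  destruct HP as [_ [_ [_ [H _]]]]; apply H.
Qed.
Lemma rx_compw {I J K} (u : J -> I) (v : K -> J) (w : K -> I) (a : ipred P I) :
  (forall k, w k = u (v k)) -> iiso (ireidx w a) (ireidx v (ireidx u a)).
Proof.
  intros Hw. assert (w = fun k => u (v k)) by (apply functional_extensionality; auto). subst.
  destruct HP as [_ [_ [_ [_ H]]]]; apply H.
Qed.
Lemma iiso_sym {I} (a b : ipred P I) : iiso a b -> iiso b a.
Proof. intros [h1 h2]; split; auto. Qed.
Lemma iiso_refl {I} (a : ipred P I) : iiso a a.
Proof. split; apply le_refl. Qed.
Lemma iiso_trans {I} (a b c : ipred P I) : iiso a b -> iiso b c -> iiso a c.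
Proof. intros [h1 h2] [h3 h4]; split; eapply le_trans; eauto. Qed.
Lemma rx_iso {I J} (u : J -> I) (a b : ipred P I) : iiso a b -> iiso (ireidx u a) (ireidx u b).
Proof. intros [h1 h2]; split; apply rx_mono; auto. Qed.

Lemma rxc1 {I J K} (u : J -> I) (v : K -> J) (w : K -> I) (a : ipred P I) :
  (forall k, w k = u (v k)) -> ile (ireidx w a) (ireidx v (ireidx u a)).
Proof. intros H; apply (rx_compw u v w a H). Qed.
Lemma rxc2 {I J K} (u : J -> I) (v : K -> J) (w : K -> I) (a : ipred P I) :
  (forall k, w k = u (v k)) -> ile (ireidx v (ireidx u a)) (ireidx w a).
Proof. intros H; apply (rx_compw u v w a H). Qed.
Lemma rxi1 {I} (w : I -> I) (a : ipred P I) : (forall i, w i = i) -> ile (ireidx w a) a.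
Proof. intros H; apply (rx_idw w a H). Qed.
Lemma rxi2 {I} (w : I -> I) (a : ipred P I) : (forall i, w i = i) -> ile a (ireidx w a).
Proof. intros H; apply (rx_idw w a H). Qed.

Lemma rx_retr1 {I J} (s : I -> J) (r : J -> I) (a : ipred P I) :
  (forall i, r (s i) = i) -> ile a (ireidx s (ireidx r a)).
Proof.
  intros H. eapply le_trans. apply (rxi2 (fun i => r (s i))); auto.
  apply rxc1; auto.
Qed.
Lemma rx_retr2 {I J} (s : I -> J) (r : J -> I) (a : ipred P I) :
  (forall i, r (s i) = i) -> ile (ireidx s (ireidx r a)) a.
Proof.
  intros H. eapply le_trans. apply (rxc2 r s (fun i => r (s i))); auto.
  apply rxi1; auto.
Qed.

Lemma rx_sq {I J K L} (u : J -> I) (v : K -> J) (u' : L -> I) (v' : K -> L) (a : ipred P I) :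
  (forall k, u (v k) = u' (v' k)) -> ile (ireidx v (ireidx u a)) (ireidx v' (ireidx u' a)).
Proof.
  intros H. eapply le_trans. apply (rxc2 u v (fun k => u (v k))); auto.
  apply rxc1. auto.
Qed.

Lemma eprime_iso {I} (pi pi' : ipred P I) : eprime pi -> iiso pi pi' -> eprime pi'.
Proof.
  intros Hp Hi J K u v phi psi Hex Hle.
  destruct (Hp J K u v phi psi Hex) as [s [Hs1 Hs2]].
  - eapply le_trans; [|exact Hle]. apply rx_mono. apply Hi.
  - exists s; split; auto. eapply le_trans; [|exact Hs2]. apply rx_mono; apply Hi.
Qed.

Lemma eprime_rx {I I'} (w : I' -> I) (pi : ipred P I) : eprime pi -> eprime (ireidx w pi).
Proof.
  intros Hp J K u v phi psi Hex Hle.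
  destruct (Hp J K (fun j => w (u j)) v phi psi Hex) as [s [Hs1 Hs2]].
  - eapply le_trans; [|exact Hle]. apply rxc1; auto.
  - exists s; split; auto. eapply le_trans; [|exact Hs2]. apply rxc2; auto.
Qed.

Lemma ex_unit {I J} (u : J -> I) (phi : ipred P J) (psi : ipred P I) : is_exists u phi psi -> ile phi (ireidx u psi).
Proof. intros H. apply H. apply le_refl. Qed.
Lemma ex_elim {I J} (u : J -> I) (phi : ipred P J) (psi chi : ipred P I) : is_exists u phi psi -> ile phi (ireidx u chi) -> ile psi chi.
Proof. intros H; apply H. Qed.
Lemma ex_iso_r {I J} (u : J -> I) (phi : ipred P J) (psi psi' : ipred P I) : is_exists u phi psi -> iiso psi psi' -> is_exists u phi psi'.
Proof.
  intros H [h1 h2] chi; split; intros Hc.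
  - apply H. exact (le_trans _ _ _ h1 Hc).
  - eapply le_trans; [exact h2|]. apply H; auto.
Qed.
Lemma ex_iso_l {I J} (u : J -> I) (phi phi' : ipred P J) (psi : ipred P I) : is_exists u phi psi -> iiso phi phi' -> is_exists u phi' psi.
Proof.
  intros H [h1 h2] chi; split; intros Hc.
  - eapply le_trans; [exact h2|]. apply H; auto.
  - apply H. exact (le_trans _ _ _ h1 Hc).
Qed.
Lemma all_counit {I J} (u : J -> I) (phi : ipred P J) (psi : ipred P I) : is_forall u phi psi -> ile (ireidx u psi) phi.
Proof. intros H. apply H. apply le_refl. Qed.
Lemma all_intro {I J} (u : J -> I) (phi : ipred P J) (psi chi : ipred P I) : is_forall u phi psi -> ile (ireidx u chi) phi -> ile chi psi.
Proof. intros H; apply H. Qed.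

Lemma top_le {I} (t a : ipred P I) : is_top t -> ile a t.
Proof. auto. Qed.
Lemma top_iso {I} (t t' : ipred P I) : is_top t -> iiso t t' -> is_top t'.
Proof. intros H [h1 h2] a. exact (le_trans _ _ _ (H a) h1). Qed.

Lemma meet_iso {I} (a b m a' b' : ipred P I) : is_meet a b m -> iiso a a' -> iiso b b' -> is_meet a' b' m.
Proof.
  intros [m1 [m2 m3]] [h1 h2] [h3 h4]. split; [|split].
  - exact (le_trans _ _ _ m1 h1).
  - exact (le_trans _ _ _ m2 h3).
  - intros x hx1 hx2. apply m3. exact (le_trans _ _ _ hx1 h2). exact (le_trans _ _ _ hx2 h4).
Qed.
End Pre.

Definition PB {I I' J} (f : I' -> I) (u : J -> I) := {p : I' * J | f (fst p) = u (snd p)}.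
Definition pb1 {I I' J} {f : I' -> I} {u : J -> I} (p : PB f u) : I' := fst (proj1_sig p).
Definition pb2 {I I' J} {f : I' -> I} {u : J -> I} (p : PB f u) : J := snd (proj1_sig p).
Lemma pb_comm {I I' J} (f : I' -> I) (u : J -> I) (p : PB f u) : f (pb1 p) = u (pb2 p).
Proof. destruct p as [[x y] h]; exact h. Qed.
Lemma PB_is_pullback {I I' J} (f : I' -> I) (u : J -> I) : is_pullback f u (@pb2 _ _ _ f u) (@pb1 _ _ _ f u).
Proof.
  split.
  - intros x; apply pb_comm.
  - intros i j H. exists (exist _ (i, j) H). split; [split; reflexivity|].
    intros [[i' j'] H'] [e1 e2]. unfold pb1, pb2 in *; simpl in *. subst.
    f_equal. apply proof_irrelevance.
Qed.
Lemma pullback_sym {I I' J J'} (f : I' -> I) (u : J -> I) (f' : J' -> J) (u' : J' -> I') :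
  is_pullback f u f' u' -> is_pullback u f u' f'.
Proof.
  intros [h1 h2]. split.
  - intros x; symmetry; auto.
  - intros j i e. destruct (h2 i j (eq_sym e)) as [x [[e1 e2] hu]].
    exists x; split; [split; auto|]. intros y [y1 y2]; apply hu; split; auto.
Qed.

Section Trip.
Context {P : IdxPreord} (HT : tripos P).

Instance tpre : indexed_preorder P := proj1 HT.

Lemma top_ex I : exists t : ipred P I, is_top t.
Proof. apply HT. Qed.
Lemma top_rx {I J} (u : J -> I) (t : ipred P I) : is_top t -> is_top (ireidx u t).
Proof. apply HT. Qed.
Lemma meet_ex {I} (a b : ipred P I) : exists m, is_meet a b m.
Proof. apply HT. Qed.
Lemma imp_ex {I} (a b : ipred P I) : exists c, is_imp a b c.
Proof. apply HT. Qed.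
Lemma imp_rx {I J} (u : J -> I) (a b c : ipred P I) : is_imp a b c -> is_imp (ireidx u a) (ireidx u b) (ireidx u c).
Proof. apply HT. Qed.
Lemma all_ex {I J} (u : J -> I) (phi : ipred P J) : exists psi, is_forall u phi psi.
Proof. apply HT. Qed.
Lemma BCall : beck_chevalley_forall P.
Proof. apply HT. Qed.
Lemma gen_ex : has_generic P.
Proof. apply HT. Qed.

Lemma imp_apply {I} (a b c z : ipred P I) : is_imp a b c -> ile z c -> ile z a -> ile z b.
Proof.
  intros H h1 h2. destruct (meet_ex c a) as [m Hm].
  assert (ile m b) by (apply (H c m Hm); apply le_refl).
  eapply le_trans; [|exact H0]. apply Hm; auto.
Qed.
Lemma imp_intro {I} (a b c z : ipred P I) : is_imp a b c ->
  (forall w, ile w z -> ile w a -> ile w b) -> ile z c.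
Proof.
  intros H h. destruct (meet_ex z a) as [m Hm].
  apply (H z m Hm). apply h; apply Hm.
Qed.
Lemma imp_iso {I} (a b c a' b' : ipred P I) : is_imp a b c -> iiso a a' -> iiso b b' -> is_imp a' b' c.
Proof.
  intros H [h1 h2] [h3 h4] x m Hm. destruct Hm as [m1 [m2 m3]]. split; intros Hx.
  - eapply le_trans; [|exact h3]. apply (imp_apply a b c m H).
    exact (le_trans _ _ _ m1 Hx). exact (le_trans _ _ _ m2 h2).
  - apply (imp_intro a b c x H). intros w hw1 hw2.
    eapply le_trans; [|exact h4]. eapply le_trans; [|exact Hx]. apply m3; auto.
    exact (le_trans _ _ _ hw2 h1).
Qed.
Lemma imp_top {I} (a b c t : ipred P I) : is_imp a b c -> is_top t -> ile t c -> ile a b.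
Proof.
  intros H Ht h. apply (imp_apply a b c a H). exact (le_trans _ _ _ (Ht a) h). apply le_refl.
Qed.

Lemma BCE : beck_chevalley_exists P.
Proof.
  intros I I' J J' f u f' u' Hpb phi psi Hex chi. split; intros Hc.
  - eapply le_trans. apply rx_mono. apply (ex_unit u phi psi Hex).
    eapply le_trans. apply (rx_sq u f' f u'). intros k. symmetry. apply Hpb.
    apply rx_mono. exact Hc.
  - destruct (all_ex f chi) as [th Hth].
    pose proof (BCall I J I' J' u f u' f' (pullback_sym _ _ _ _ Hpb) chi th Hth) as Hb.
    assert (ile phi (ireidx u th)) by (apply (all_intro f' _ _ _ Hb); exact Hc).
    assert (ile psi th) by (apply (ex_elim u phi psi th Hex H)).
    eapply le_trans. apply rx_mono. exact H0. apply all_counit; exact Hth.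
Qed.

Lemma EX {I J} (u : J -> I) (phi : ipred P J) : exists psi, is_exists u phi psi.
Proof.
  destruct gen_ex as [Cg [iota Hgen]].
  set (w := fun y : J * Cg => (u (fst y), snd y)).
  destruct (imp_ex (ireidx (@fst J Cg) phi) (ireidx (@snd J Cg) iota)) as [rho Hrho].
  destruct (all_ex w rho) as [th Hth].
  destruct (imp_ex th (ireidx (@snd I Cg) iota)) as [ka Hka].
  destruct (all_ex (@fst I Cg) ka) as [psi Hpsi].
  exists psi. intros chi. split; intros Hc.
  -
    eapply le_trans; [|apply rx_mono; exact Hc].
    assert (Hpb : is_pullback u (@fst I Cg) w (@fst J Cg)).
    { split. intros y; reflexivity.
      intros i x e. exists (i, snd x). split. split. reflexivity.
      unfold w; simpl. rewrite e. destruct x; reflexivity.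
      intros y [e1 e2]. rewrite <- e2. unfold w. destruct y; simpl in *. subst. reflexivity. }
    pose proof (BCall _ _ _ _ u (@fst I Cg) w (@fst J Cg) Hpb ka psi Hpsi) as Hb.
    apply (all_intro _ _ _ _ Hb).
    pose proof (imp_rx w _ _ _ Hka) as Hk2.
    apply (imp_intro _ _ _ _ Hk2). intros z hz1 hz2.
    eapply le_trans; [| apply (rxc1 snd w snd); reflexivity].
    apply (imp_apply _ _ rho z Hrho); auto.
    exact (le_trans _ _ _ hz2 (all_counit _ _ _ Hth)).
  - destruct (Hgen I chi) as [f Hf].
    set (s := fun i : I => (i, f i)).
    set (f' := fun j : J => (j, f (u j))).
    assert (Hpb : is_pullback s w f' u).
    { split. intros x; reflexivity.
      intros i y e. exists (fst y). unfold s, w in e. injection e; intros e2 e1.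
      split. split. auto. unfold f'. destruct y; simpl in *. subst. reflexivity.
      intros y' [e3 e4]. rewrite <- e4. reflexivity. }
    pose proof (BCall _ _ _ _ s w f' u Hpb rho th Hth) as Hb.
    assert (Hst : ile psi (ireidx s th)).
    { apply (all_intro _ _ _ _ Hb).
      pose proof (imp_rx f' _ _ _ Hrho) as Hr2.
      apply (imp_intro _ _ _ _ Hr2). intros z hz1 hz2.
      eapply le_trans; [|apply (rxc1 snd f' (fun j => f (u j))); reflexivity].
      eapply le_trans; [|apply (rxc2 f u (fun j => f (u j))); reflexivity].
      eapply le_trans; [|apply rx_mono; apply Hf].
      eapply le_trans; [|exact Hc].
      eapply le_trans; [exact hz2|]. apply (rx_retr2 f' fst); reflexivity. }
    assert (Hsk : ile psi (ireidx s ka)).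
    { eapply le_trans. apply (rx_retr1 s fst). reflexivity.
      apply rx_mono. apply all_counit; exact Hpsi. }
    pose proof (imp_rx s _ _ _ Hka) as Hk3.
    pose proof (imp_apply _ _ _ psi Hk3 Hsk Hst) as H1.
    eapply le_trans; [exact H1|]. eapply le_trans. apply (rxc2 snd s f); reflexivity.
    apply Hf.
Qed.

End Trip.

Lemma fchoice {A B : Type} (R : A -> B -> Prop) : (forall a, exists b, R a b) -> exists f : A -> B, forall a, R a (f a).
Proof.
  intros H. exists (fun a => proj1_sig (constructive_indefinite_description _ (H a))).
  intros a. exact (proj2_sig (constructive_indefinite_description _ (H a))).
Qed.

Lemma meet_in_iso {P : IdxPreord} {HP : indexed_preorder P} (S : forall I, ipred P I -> Prop) {I} (a b m a' b' m' : ipred P I) :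
  is_meet_in S a b m -> iiso a a' -> iiso b b' -> iiso m m' -> S I m' -> is_meet_in S a' b' m'.
Proof.
  intros [Sm [h1 [h2 h3]]] [i1 i2] [i3 i4] [i5 i6] Sm'. split; [exact Sm'|split; [|split]].
  - exact (le_trans _ _ _ i6 (le_trans _ _ _ h1 i1)).
  - exact (le_trans _ _ _ i6 (le_trans _ _ _ h2 i3)).
  - intros x Sx hx1 hx2. eapply le_trans; [|exact i5]. apply h3; auto.
    exact (le_trans _ _ _ hx1 i2). exact (le_trans _ _ _ hx2 i4).
Qed.

Section Constr.
Context {P : IdxPreord} (HT : tripos P).
Instance tpreC : indexed_preorder P := tpre HT.
Context (Hen : enough_eprimes P) (Hfm : sub_finite_meets (@eprime P)).
Context (C : Type) (delta : ipred P C) (Hdp : eprime delta)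
  (Hdgen : forall (B : Type) (phi : ipred P B), eprime phi -> exists f : B -> C, iiso phi (ireidx f delta))
  (Hdd : discrete_in (@eprime P) delta).
Context (pr : C * C -> C) (Hpr : is_meet_in (@eprime P) (ireidx fst delta) (ireidx snd delta) (ireidx pr delta)).

Definition D {J} (x : J -> C) : ipred P J := ireidx x delta.
Definition Dp {J} (x y : J -> C) : ipred P J := ireidx (fun j => pr (x j, y j)) delta.

Lemma D_prime {J} (x : J -> C) : eprime (D x).
Proof. apply eprime_rx; auto. Qed.
Lemma Dp_prime {J} (x y : J -> C) : eprime (Dp x y).
Proof. apply eprime_rx; auto. Qed.

Lemma Dp_meet {J} (x y : J -> C) : is_meet_in (@eprime P) (D x) (D y) (Dp x y).
Proof.
  destruct Hfm as [_ [_ [_ H4]]].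
  set (xy := fun j => (x j, y j)).
  pose proof (H4 _ _ xy _ _ _ (eprime_rx fst _ Hdp) (eprime_rx snd _ Hdp) Hpr) as H.
  eapply meet_in_iso; [exact H| | | |apply Dp_prime].
  - apply iiso_sym. apply rx_compw. reflexivity.
  - apply iiso_sym. apply rx_compw. reflexivity.
  - apply iiso_sym. apply rx_compw. reflexivity.
Qed.
Lemma P1 {J} (x y : J -> C) : ile (Dp x y) (D x).
Proof. apply (Dp_meet x y). Qed.
Lemma P2 {J} (x y : J -> C) : ile (Dp x y) (D y).
Proof. apply (Dp_meet x y). Qed.
Lemma P3 {J} (x y : J -> C) (z : ipred P J) : eprime z -> ile z (D x) -> ile z (D y) -> ile z (Dp x y).
Proof. intros. apply (Dp_meet x y); auto. Qed.

Lemma D_ext {J} (x y : J -> C) : (forall j, x j = y j) -> D x = D y.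
Proof. intros H. assert (x = y) by (apply functional_extensionality; auto). subst; reflexivity. Qed.
Lemma D_rx {J K} (x : J -> C) (v : K -> J) : iiso (ireidx v (D x)) (D (fun k => x (v k))).
Proof. apply iiso_sym. apply rx_compw. reflexivity. Qed.

Definition Ash (c : C) : Prop := exists t : ipred P unit, is_top t /\ ile t (D (fun _ : unit => c)).

Lemma desig_ex : exists d, Ash d.
Proof.
  destruct Hfm as [H1 [H2 _]].
  destruct (H1 unit) as [t' [Ht'p Ht']].
  destruct (Hdgen _ _ Ht'p) as [f Hf].
  destruct (top_ex HT unit) as [t Ht].
  destruct (Hen unit t) as [J [u [pi [Hpi Hex]]]].
  exists (f tt), t. split; auto.
  assert (ile t t').
  { apply (ex_elim u pi t t' Hex). apply (H2 _ _ u t' (conj Ht'p Ht')); auto. }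
  eapply le_trans; [exact H|]. eapply le_trans; [apply Hf|]. unfold D.
  replace (fun _ : unit => f tt) with f; [apply le_refl|].
  apply functional_extensionality; intros []; reflexivity.
Qed.

Lemma desig_unif (c : C) : Ash c -> forall J (phi : ipred P J), ile phi (D (fun _ : J => c)).
Proof.
  intros [t [Ht Hc]] J phi.
  eapply le_trans. apply (top_rx HT (fun _ : J => tt) t Ht).
  eapply le_trans. apply rx_mono. exact Hc.
  apply rxc2. reflexivity.
Qed.

Lemma desig_from (c : C) : (exists d, Ash d /\ ile (D (fun _ : unit => d)) (D (fun _ : unit => c))) -> Ash c.
Proof.
  intros [d [[t [Ht Hd]] Hdc]]. exists t; split; auto. eapply le_trans; eauto.
Qed.

Context (Gam : ipred P (C * C)) (HGam : is_imp (ireidx fst delta) (ireidx snd delta) Gam).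
Context (JR : Type) (uR : JR -> C * C) (hR : JR -> C) (HR : is_exists uR (ireidx hR delta) Gam).

Definition R (a b e : C) : Prop := exists r, uR r = (a, b) /\ hR r = e.

Lemma R_unif {J} (a b e : J -> C) : (forall j, R (a j) (b j) (e j)) -> ile (Dp e a) (D b).
Proof.
  intros H. destruct (fchoice _ H) as [r Hr].
  set (ab := fun j => (a j, b j)).
  assert (HG : is_imp (D a) (D b) (ireidx ab Gam)).
  { eapply imp_iso; [apply HT| apply (imp_rx HT ab _ _ _ HGam) | |].
    apply iiso_sym; apply rx_compw; reflexivity.
    apply iiso_sym; apply rx_compw; reflexivity. }
  apply (imp_apply HT _ _ _ _ HG); [|apply P2].
  eapply le_trans; [apply P1|].
  assert (Hf : forall j, e j = hR (r j)) by (intros j; destruct (Hr j) as [_ h]; auto).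
  eapply le_trans. apply (rxc1 hR r e); auto.
  eapply le_trans. apply rx_mono. apply (ex_unit _ _ _ HR).
  apply rxc2. intros j. destruct (Hr j) as [h _]. rewrite h. reflexivity.
Qed.

Lemma R_func a b1 b2 e : R a b1 e -> R a b2 e -> b1 = b2.
Proof.
  intros H1 H2.
  set (K := {r : JR | fst (uR r) = a /\ hR r = e}).
  set (f := fun k : K => snd (uR (proj1_sig k))).
  destruct (Hdd K unit (fun _ => tt) f (Dp (fun _ : unit => e) (fun _ => a))) as [g Hg].
  - intros []. destruct H1 as [r [h1 h2]]. exists (exist _ r (conj (f_equal fst h1) h2)). reflexivity.
  - apply Dp_prime.
  - eapply le_trans. apply (rxc2 _ _ (fun _ : K => pr (e, a))). reflexivity.
    apply (R_unif (fun _ => a) f (fun _ => e)).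
    intros [r [h1 h2]]. exists r. split; auto. unfold f; simpl. rewrite <- h1. destruct (uR r); reflexivity.
  - destruct H1 as [r1 [h1 h2]]. destruct H2 as [r2 [h3 h4]].
    pose proof (Hg (exist _ r1 (conj (f_equal fst h1) h2))) as g1.
    pose proof (Hg (exist _ r2 (conj (f_equal fst h3) h4))) as g2.
    unfold f in g1, g2; simpl in g1, g2. rewrite h1 in g1. rewrite h3 in g2. simpl in *. congruence.
Qed.

Lemma R_complete {J} (g h : J -> C) : ile (D g) (D h) -> exists e, Ash e /\ forall j, R (g j) (h j) e.
Proof.
  intros Hgh. destruct desig_ex as [d0 Hd0].
  destruct (classic (inhabited J)) as [[j0]|nJ].
  2:{ exists d0. split; auto. intros j. exfalso. apply nJ. constructor. exact j. }
  set (gh := fun j => (g j, h j)).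
  assert (HG : is_imp (D g) (D h) (ireidx gh Gam)).
  { eapply imp_iso; [apply HT| apply (imp_rx HT gh _ _ _ HGam) | |].
    apply iiso_sym; apply rx_compw; reflexivity.
    apply iiso_sym; apply rx_compw; reflexivity. }
  destruct (top_ex HT J) as [tJ HtJ].
  assert (H1 : ile tJ (ireidx gh Gam)).
  { apply (imp_intro HT _ _ _ _ HG). intros w _ hw. exact (le_trans _ _ _ hw Hgh). }
  destruct (all_ex HT (fun _ : J => tt) (ireidx gh Gam)) as [Om HOm].
  set (D1 := D (fun _ : unit => d0)).
  assert (H2 : ile D1 Om).
  { apply (all_intro _ _ _ _ HOm). exact (le_trans _ _ _ (HtJ _) H1). }
  destruct (Hen unit Om) as [JO [w [piO [HpiO HexO]]]].
  destruct (D_prime (fun _ : unit => d0) unit JO (fun x => x) w piO Om HexO) as [s [Hs1 Hs2]].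
  { eapply le_trans; [apply rxi1; reflexivity|]. exact H2. }
  destruct (Hdgen _ _ HpiO) as [z Hz].
  set (e0 := z (s tt)).
  assert (H3 : ile D1 (D (fun _ : unit => e0))).
  { eapply le_trans. apply rxi2. reflexivity. eapply le_trans. exact Hs2.
    eapply le_trans. apply rx_mono. apply Hz. apply rxc2. intros []. reflexivity. }
  assert (H4 : ile (D (fun _ : unit => e0)) Om).
  { eapply le_trans. apply (rxc1 z s). intros []; reflexivity.
    eapply le_trans. apply rx_mono. apply Hz.
    eapply le_trans. apply rx_mono. apply (ex_unit _ _ _ HexO).
    apply rx_retr2. intros []. destruct (w (s tt)). reflexivity. }
  assert (H5 : ile (ireidx (fun _ : J => tt) (D (fun _ : unit => e0))) (ireidx gh Gam)).
  { eapply le_trans. apply rx_mono. exact H4. apply all_counit; exact HOm. }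
  pose proof (BCE HT _ _ _ _ gh uR pb2 pb1 (PB_is_pullback gh uR) _ _ HR) as HB.
  destruct (D_prime (fun _ : unit => e0) J (PB gh uR) (fun _ => tt) pb1 _ _ HB H5) as [s' [Hs'1 Hs'2]].
  set (f := fun j => hR (pb2 (s' j))).
  assert (H6 : ile (ireidx (fun _ : J => tt) (D (fun _ : unit => e0))) (D f)).
  { eapply le_trans. exact Hs'2. eapply le_trans. apply (rxc2 pb2 s' (fun j => pb2 (s' j))). reflexivity.
    apply rxc2. reflexivity. }
  destruct (Hdd J unit (fun _ => tt) f (D (fun _ : unit => e0))) as [g0 Hg0].
  - intros []. exists j0. reflexivity.
  - apply D_prime.
  - exact H6.
  - exists (g0 tt). split.
    + apply desig_from. exists d0. split; auto. eapply le_trans. exact H3.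
      eapply le_trans. apply (rx_retr1 (fun _ : unit => j0) (fun _ : J => tt)). intros []; reflexivity.
      eapply le_trans. apply rx_mono. exact H6. apply rxc2. intros []. simpl. rewrite <- (Hg0 j0). reflexivity.
    + intros j. exists (pb2 (s' j)). split.
      * rewrite <- (pb_comm gh uR (s' j)). rewrite Hs'1. reflexivity.
      * exact (eq_sym (Hg0 j)).
Qed.


Lemma Ash_pair a b : Ash a -> Ash b -> Ash (pr (a, b)).
Proof.
  intros Ha Hb. destruct desig_ex as [d Hd]. apply desig_from. exists d. split; auto.
  change (D (fun _ : unit => pr (a, b))) with (Dp (fun _ : unit => a) (fun _ => b)).
  apply P3. apply D_prime. apply desig_unif; auto. apply desig_unif; auto.
Qed.

Definition Good (app : C -> C -> option C) : Prop :=
  (forall J (x y d : J -> C), (forall j, app (x j) (y j) = Some (d j)) -> ile (Dp x y) (D d)) /\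
  (forall J (g h : J -> C), ile (D g) (D h) -> exists e, Ash e /\ forall j, app e (g j) = Some (h j)).

Lemma opt_ext {A : Type} (o1 o2 : option A) : (forall d, o1 = Some d <-> o2 = Some d) -> o1 = o2.
Proof.
  intros H. destruct o1 as [a|], o2 as [b|]; auto.
  - apply H; reflexivity.
  - symmetry; apply H; reflexivity.
  - apply H; reflexivity.
Qed.

Lemma subsing : (forall x y, Ash x -> Ash y -> x = y) -> forall a b : C, a = b.
Proof.
  intros Heq a b.
  destruct (R_complete pr fst) as [e1 [A1 H1]]. { apply Hpr. }
  destruct (R_complete pr snd) as [e2 [A2 H2]]. { apply Hpr. }
  destruct (R_complete (fun c : C => c) (fun c => c)) as [e3 [A3 H3]]. { apply le_refl. }
  assert (e1 = e3) by auto. assert (e2 = e3) by auto. subst.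
  pose proof (H1 (a, b)) as h1. pose proof (H2 (a, b)) as h2. pose proof (H3 (pr (a, b))) as h3.
  simpl in *. pose proof (R_func _ _ _ _ h1 h3). pose proof (R_func _ _ _ _ h2 h3). congruence.
Qed.

Lemma degenerate_pca : (forall x y, Ash x -> Ash y -> x = y) ->
  exists app, rel_pca app Ash /\ Good app.
Proof.
  intros Heq. pose proof (subsing Heq) as Hs. destruct desig_ex as [d0 Hd0].
  exists (fun x _ => Some x). split; [split|split].
  - intros a b c Ha _ E. injection E; intros; subst; auto.
  - exists d0, d0. split; [auto|split; [auto|split; [|split]]].
    + intros a b. simpl. f_equal. apply Hs.
    + intros a b. simpl. discriminate.
    + intros a b c. simpl. f_equal. apply Hs.
  - intros J x y d H. assert (forall j, d j = x j) by (intros j; specialize (H j); injection H; auto).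
    rewrite (D_ext d x H0). apply P1.
  - intros J g h _. exists d0. split; auto. intros j. f_equal. apply Hs.
Qed.

Section Main.
Context (T1 T2 : C) (HT1 : Ash T1) (HT2 : Ash T2) (Hne : T1 <> T2).

Lemma pr_inj p q : pr p = pr q -> p = q.
Proof.
  intros E.
  set (J := {c : C | exists p, pr p = c}).
  set (e := fun p : C * C => exist (fun c => exists p, pr p = c) (pr p) (ex_intro _ p eq_refl) : J).
  assert (Hsurj : forall j : J, exists k, e k = j).
  { intros [c [p' Hp']]. exists p'. unfold e. subst. apply ProofIrrelevance.ProofIrrelevanceTheory.subset_eq_compat. reflexivity. }
  assert (Hle : forall f : C * C -> C, ile (ireidx pr delta) (ireidx f delta) ->
     exists g : J -> C, forall k, g (e k) = f k).
  { intros f Hf. apply (Hdd (C * C)%type J e f (ireidx (@proj1_sig C _) delta) Hsurj).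
    apply eprime_rx; auto.
    eapply le_trans; [|exact Hf]. apply rxc2. reflexivity. }
  destruct (Hle fst) as [g1 Hg1]. apply Hpr.
  destruct (Hle snd) as [g2 Hg2]. apply Hpr.
  assert (e p = e q).
  { unfold e. apply ProofIrrelevance.ProofIrrelevanceTheory.subset_eq_compat. exact E. }
  destruct p as [p1 p2], q as [q1 q2].
  pose proof (Hg1 (p1, p2)). pose proof (Hg1 (q1, q2)).
  pose proof (Hg2 (p1, p2)). pose proof (Hg2 (q1, q2)). simpl in *.
  rewrite H in H0, H2. f_equal; congruence.
Qed.

Definition S2c (a b : C) : C := pr (T1, pr (a, b)).
Definition FT : C := pr (T2, T2).
Definition isS2 (t : C) : Prop := exists a b, t = S2c a b.

Lemma notS2_T2 a : ~ isS2 (pr (T2, a)).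
Proof.
  intros [x [y E]]. unfold S2c in E. apply pr_inj in E. injection E; intros; auto.
Qed.
Lemma S2c_inj a b a' b' : S2c a b = S2c a' b' -> a = a' /\ b = b'.
Proof.
  unfold S2c. intros E. apply pr_inj in E. injection E; intros E2.
  apply pr_inj in E2. injection E2; auto.
Qed.

Inductive Gr : C -> C -> C -> Prop :=
| Gfull e t y d : ~ isS2 t -> R (pr (y, t)) d e -> Gr (pr (e, t)) y d
| Gs2 e a b y x1 y1 d : Gr a y x1 -> Gr b y y1 -> Gr x1 y1 d -> R (pr (y, S2c a b)) d e ->
    Gr (pr (e, S2c a b)) y d.

Definition W (x y d : C) : Prop := exists e t, x = pr (e, t) /\ R (pr (y, t)) d e.

Lemma Gr_W x y d : Gr x y d -> W x y d.
Proof. intros H; destruct H; eexists; eexists; split; eauto. Qed.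

Lemma W_func x y d1 d2 : W x y d1 -> W x y d2 -> d1 = d2.
Proof.
  intros [e [t [E1 H1]]] [e' [t' [E2 H2]]]. rewrite E1 in E2. apply pr_inj in E2.
  injection E2; intros; subst. eapply R_func; eauto.
Qed.
Lemma Gr_func x y d1 d2 : Gr x y d1 -> Gr x y d2 -> d1 = d2.
Proof. intros H1 H2. eapply W_func; apply Gr_W; eauto. Qed.

Lemma W_unif {J} (x y d : J -> C) : (forall j, W (x j) (y j) (d j)) -> ile (Dp x y) (D d).
Proof.
  intros H.
  destruct (fchoice (fun j et => x j = pr (fst et, snd et) /\ R (pr (y j, snd et)) (d j) (fst et))) as [et Het].
  { intros j. destruct (H j) as [e [t [h1 h2]]]. exists (e, t). auto. }
  set (e := fun j => fst (et j)). set (t := fun j => snd (et j)).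
  assert (Ex : forall j, x j = pr (e j, t j)) by (intros j; apply Het).
  pose proof (R_unif (fun j => pr (y j, t j)) d e (fun j => proj2 (Het j))) as HR1.
  eapply le_trans; [|exact HR1].
  assert (HX : ile (Dp x y) (Dp e t)).
  { eapply le_trans. apply P1. rewrite (D_ext x (fun j => pr (e j, t j)) Ex). apply le_refl. }
  apply P3. apply Dp_prime.
  - exact (le_trans _ _ _ HX (P1 _ _)).
  - change (D (fun j => pr (y j, t j))) with (Dp y t). apply P3. apply Dp_prime. apply P2.
    exact (le_trans _ _ _ HX (P2 _ _)).
Qed.

Definition app (x y : C) : option C :=
  match excluded_middle_informative (exists d, Gr x y d) with
  | left H => Some (proj1_sig (constructive_indefinite_description _ H))
  | right _ => None
  end.

Lemma app_Some x y d : Gr x y d -> app x y = Some d.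
Proof.
  intros H. unfold app. destruct (excluded_middle_informative _) as [H'|H'].
  - f_equal. destruct (constructive_indefinite_description _ H') as [d' Hd']. simpl. eapply Gr_func; eauto.
  - exfalso; apply H'; eauto.
Qed.
Lemma app_Gr x y d : app x y = Some d -> Gr x y d.
Proof.
  unfold app. destruct (excluded_middle_informative _) as [H'|H']; [|discriminate].
  intros E. injection E; intros <-. apply proj2_sig.
Qed.

Lemma notS2_FT : ~ isS2 FT.
Proof. apply notS2_T2. Qed.
Lemma Ash_FT : Ash FT.
Proof. apply Ash_pair; auto. Qed.

Lemma app_full e t y d : ~ isS2 t -> R (pr (y, t)) d e -> app (pr (e, t)) y = Some d.
Proof. intros; apply app_Some; constructor; auto. Qed.

Lemma Good_app : Good app.
Proof.
  split.
  - intros J x y d H. apply W_unif. intros j. apply Gr_W. apply app_Gr. auto.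
  - intros J g h Hgh.
    destruct (R_complete (fun j => pr (g j, FT)) h) as [eR [AR HR']].
    { eapply le_trans; [|exact Hgh]. change (D (fun j => pr (g j, FT))) with (Dp g (fun _ => FT)). apply P1. }
    exists (pr (eR, FT)). split. apply Ash_pair; auto. apply Ash_FT.
    intros j. apply app_full. apply notS2_FT. apply HR'.
Qed.

Lemma Ash_closed a b c : Ash a -> Ash b -> app a b = Some c -> Ash c.
Proof.
  intros Ha Hb E. destruct desig_ex as [d Hd]. apply desig_from. exists d. split; auto.
  pose proof (proj1 Good_app unit (fun _ => a) (fun _ => b) (fun _ => c) (fun _ => E)) as H.
  eapply le_trans; [|exact H]. apply P3. apply D_prime. apply desig_unif; auto. apply desig_unif; auto.
Qed.

Record Sq := mkSq { qa : C; qb : C; qc : C; qx : C; qy : C; qd : C;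
  qW1 : W qa qc qx; qW2 : W qb qc qy; qW3 : W qx qy qd }.

Lemma main_pca : exists app, rel_pca app Ash /\ Good app.
Proof.
  exists app. split; [|exact Good_app].
  split; [exact Ash_closed|].
  destruct (R_complete (fun q : C * C => pr (snd q, pr (T2, fst q))) fst) as [eK1 [AK1 HK1]].
  { change (D (fun q : C * C => pr (snd q, pr (T2, fst q)))) with (Dp snd (fun q : C * C => pr (T2, fst q))).
    eapply le_trans. apply P2. change (D (fun q : C * C => pr (T2, fst q))) with (Dp (fun _ : C * C => T2) fst). apply P2. }
  destruct (R_complete (fun a => pr (a, FT)) (fun a => pr (eK1, pr (T2, a)))) as [ek [Ak Hk]].
  { change (D (fun a => pr (eK1, pr (T2, a)))) with (Dp (fun _ : C => eK1) (fun a => pr (T2, a))).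
    apply P3. apply D_prime. apply desig_unif; auto.
    change (D (fun a => pr (T2, a))) with (Dp (fun _ : C => T2) (fun a => a)).
    apply P3. apply D_prime. apply desig_unif; auto.
    change (D (fun a => pr (a, FT))) with (Dp (fun a : C => a) (fun _ => FT)). apply P1. }
  destruct (R_complete (fun q : Sq => pr (qc q, S2c (qa q) (qb q))) qd) as [eS [AS HS]].
  { set (z := D (fun q : Sq => pr (qc q, S2c (qa q) (qb q)))).
    assert (zp : eprime z) by apply D_prime.
    assert (zc : ile z (D qc)) by (apply (P1 qc (fun q => S2c (qa q) (qb q)))).
    assert (zs : ile z (D (fun q => pr (qa q, qb q)))).
    { eapply le_trans. apply (P2 qc (fun q => S2c (qa q) (qb q))).
      unfold S2c. apply (P2 (fun _ => T1) (fun q => pr (qa q, qb q))). }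
    assert (za : ile z (D qa)) by (exact (le_trans _ _ _ zs (P1 _ _))).
    assert (zb : ile z (D qb)) by (exact (le_trans _ _ _ zs (P2 _ _))).
    assert (zx : ile z (D qx)).
    { eapply le_trans; [|apply (W_unif qa qc qx qW1)]. apply P3; auto. }
    assert (zy : ile z (D qy)).
    { eapply le_trans; [|apply (W_unif qb qc qy qW2)]. apply P3; auto. }
    eapply le_trans; [|apply (W_unif qx qy qd qW3)]. apply P3; auto. }
  destruct (R_complete (fun q : C * C => pr (snd q, pr (T2, fst q))) (fun q => pr (eS, S2c (fst q) (snd q)))) as [es1 [As1 Hs1]].
  { set (z := D (fun q : C * C => pr (snd q, pr (T2, fst q)))).
    assert (zp : eprime z) by apply D_prime.
    assert (zb : ile z (D snd)) by apply (P1 snd (fun q : C * C => pr (T2, fst q))).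
    assert (za : ile z (D fst)).
    { eapply le_trans. apply (P2 snd (fun q : C * C => pr (T2, fst q))). apply (P2 (fun _ => T2) fst). }
    change (D (fun q : C * C => pr (eS, S2c (fst q) (snd q)))) with (Dp (fun _ : C * C => eS) (fun q => S2c (fst q) (snd q))).
    apply P3; auto. apply desig_unif; auto.
    unfold S2c. change (D (fun q : C * C => pr (T1, pr (fst q, snd q)))) with (Dp (fun _ : C * C => T1) (fun q => pr (fst q, snd q))).
    apply P3; auto. apply desig_unif; auto. apply P3; auto. }
  destruct (R_complete (fun a => pr (a, FT)) (fun a => pr (es1, pr (T2, a)))) as [es [As Hs]].
  { change (D (fun a => pr (es1, pr (T2, a)))) with (Dp (fun _ : C => es1) (fun a => pr (T2, a))).
    apply P3. apply D_prime. apply desig_unif; auto.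
    change (D (fun a => pr (T2, a))) with (Dp (fun _ : C => T2) (fun a => a)).
    apply P3. apply D_prime. apply desig_unif; auto.
    change (D (fun a => pr (a, FT))) with (Dp (fun a : C => a) (fun _ => FT)). apply P1. }
  exists (pr (ek, FT)), (pr (es, FT)).
  split; [apply Ash_pair; auto; apply Ash_FT|].
  split; [apply Ash_pair; auto; apply Ash_FT|].
  assert (Eka : forall a, app (pr (ek, FT)) a = Some (pr (eK1, pr (T2, a)))).
  { intros a. apply app_full. apply notS2_FT. apply (Hk a). }
  assert (Esa : forall a, app (pr (es, FT)) a = Some (pr (es1, pr (T2, a)))).
  { intros a. apply app_full. apply notS2_FT. apply (Hs a). }
  assert (Esab : forall a b, app (pr (es1, pr (T2, a))) b = Some (pr (eS, S2c a b))).
  { intros a b. apply app_full. apply notS2_T2. apply (Hs1 (a, b)). }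
  split; [|split].
  - intros a b. simpl. rewrite Eka. simpl. apply app_full. apply notS2_T2. apply (HK1 (a, b)).
  - intros a b. simpl. rewrite Esa. simpl. rewrite Esab. discriminate.
  - intros a b c. simpl. rewrite Esa. simpl. rewrite Esab. simpl.
    apply opt_ext. intros d. split.
    + intros E. apply app_Gr in E.
      remember (pr (eS, S2c a b)) as X eqn:EX. destruct E as [e t y d' HnS _|e a' b' y x1 y1 d' G1 G2 G3 _].
      * exfalso. apply pr_inj in EX. injection EX; intros; subst. apply HnS. exists a, b. reflexivity.
      * apply pr_inj in EX. injection EX; intros E2 _. apply S2c_inj in E2. destruct E2; subst.
        rewrite (app_Some _ _ _ G1), (app_Some _ _ _ G2). simpl. apply app_Some; auto.
    + destruct (app a c) as [x1|] eqn:E1; [|discriminate].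
      destruct (app b c) as [y1|] eqn:E2; [|discriminate].
      simpl. intros E3. apply app_Gr in E1, E2, E3.
      apply app_Some. eapply Gs2; eauto.
      apply (HS (mkSq a b c x1 y1 d (Gr_W _ _ _ E1) (Gr_W _ _ _ E2) (Gr_W _ _ _ E3))).
Qed.
End Main.

Lemma good_pca : exists app, rel_pca app Ash /\ Good app.
Proof.
  destruct (classic (exists T1 T2, Ash T1 /\ Ash T2 /\ T1 <> T2)) as [[T1 [T2 [h1 [h2 h3]]]]|Hn].
  - exact (main_pca T1 T2 h1 h2 h3).
  - apply degenerate_pca. intros x y hx hy. apply NNPP. intros hne. apply Hn. exists x, y; auto.
Qed.


Section EQV.
Context (app : C -> C -> option C) (HG : Good app).

Definition Fam {I J} (u : J -> I) (h : J -> C) : I -> C -> Prop := fun i c => exists j, u j = i /\ h j = c.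

Lemma ORD1 {I J1 J2} (u1 : J1 -> I) (h1 : J1 -> C) (u2 : J2 -> I) (h2 : J2 -> C) psi1 psi2
  (Phi1 Phi2 : I -> C -> Prop) :
  is_exists u1 (D h1) psi1 -> is_exists u2 (D h2) psi2 -> ile psi1 psi2 ->
  (forall i c, Phi1 i c -> Fam u1 h1 i c) -> (forall i c, Fam u2 h2 i c -> Phi2 i c) ->
  rt_le app Ash Phi1 Phi2.
Proof.
  intros E1 E2 Hle F1 F2.
  assert (H1 : ile (D h1) (ireidx u1 psi2)).
  { eapply le_trans. apply (ex_unit _ _ _ E1). apply rx_mono; auto. }
  pose proof (BCE HT _ _ _ _ u1 u2 pb2 pb1 (PB_is_pullback u1 u2) _ _ E2) as HB.
  destruct (D_prime h1 J1 (PB u1 u2) (fun j => j) pb1 _ _ HB) as [s [Hs1 Hs2]].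
  { eapply le_trans; [apply rxi1; reflexivity|]. exact H1. }
  destruct (proj2 HG J1 h1 (fun j => h2 (pb2 (s j)))) as [e [Ae He]].
  { eapply le_trans. apply rxi2; reflexivity. eapply le_trans. exact Hs2.
    eapply le_trans. apply (rxc2 pb2 s (fun j => pb2 (s j))). reflexivity. apply rxc2. reflexivity. }
  exists e. split; auto. intros i a Ha. destruct (F1 i a Ha) as [j [<- <-]].
  exists (h2 (pb2 (s j))). split; auto. apply F2. exists (pb2 (s j)). split; auto.
  rewrite <- (pb_comm u1 u2 (s j)). rewrite Hs1. reflexivity.
Qed.

Lemma ORD2 {I J1 J2} (u1 : J1 -> I) (h1 : J1 -> C) (u2 : J2 -> I) (h2 : J2 -> C) psi1 psi2
  (Phi1 Phi2 : I -> C -> Prop) :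
  is_exists u1 (D h1) psi1 -> is_exists u2 (D h2) psi2 ->
  (forall i c, Fam u1 h1 i c -> Phi1 i c) -> (forall i c, Phi2 i c -> Fam u2 h2 i c) ->
  rt_le app Ash Phi1 Phi2 -> ile psi1 psi2.
Proof.
  intros E1 E2 F1 F2 [e [Ae He]].
  destruct (fchoice (fun j1 j2 => app e (h1 j1) = Some (h2 j2) /\ u2 j2 = u1 j1)) as [j2 Hj2].
  { intros j1. destruct (He (u1 j1) (h1 j1) (F1 _ _ (ex_intro _ j1 (conj eq_refl eq_refl)))) as [b [hb1 hb2]].
    destruct (F2 _ _ hb2) as [j [hj1 hj2]]. exists j. subst. auto. }
  apply (ex_elim _ _ _ _ E1).
  pose proof (proj1 HG J1 (fun _ => e) h1 (fun j => h2 (j2 j)) (fun j => proj1 (Hj2 j))) as HU.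
  eapply le_trans. apply (P3 (fun _ => e) h1). apply D_prime. apply desig_unif; auto. apply le_refl.
  eapply le_trans. exact HU.
  eapply le_trans. apply (rxc1 h2 j2). reflexivity.
  eapply le_trans. apply rx_mono. apply (ex_unit _ _ _ E2).
  apply rxc2. intros j. symmetry. apply Hj2.
Qed.

Lemma dec_ex {I} (phi : ipred P I) :
  exists p : {J : Type & ((J -> I) * (J -> C))%type}, is_exists (fst (projT2 p)) (D (snd (projT2 p))) phi.
Proof.
  destruct (Hen I phi) as [J [u [pi [Hpi Hex]]]].
  destruct (Hdgen _ _ Hpi) as [h Hh].
  exists (existT _ J (u, h)). simpl. eapply ex_iso_l; eauto.
Qed.

Definition decp {I} (phi : ipred P I) := proj1_sig (constructive_indefinite_description _ (dec_ex phi)).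
Definition dU {I} (phi : ipred P I) := fst (projT2 (decp phi)).
Definition dH {I} (phi : ipred P I) := snd (projT2 (decp phi)).
Lemma d_spec {I} (phi : ipred P I) : is_exists (dU phi) (D (dH phi)) phi.
Proof. exact (proj2_sig (constructive_indefinite_description _ (dec_ex phi))). Qed.

Definition Fq (I : Type) (phi : ipred P I) : I -> C -> Prop := Fam (dU phi) (dH phi).

Definition Sg {I} (Phi : I -> C -> Prop) := {x : I * C | Phi (fst x) (snd x)}.
Definition s1 {I} {Phi : I -> C -> Prop} (x : Sg Phi) : I := fst (proj1_sig x).
Definition s2 {I} {Phi : I -> C -> Prop} (x : Sg Phi) : C := snd (proj1_sig x).
Definition Gq (I : Type) (Phi : I -> C -> Prop) : ipred P I :=
  proj1_sig (constructive_indefinite_description _ (EX HT (@s1 I Phi) (D (@s2 I Phi)))).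
Lemma G_spec {I} (Phi : I -> C -> Prop) : is_exists (@s1 I Phi) (D (@s2 I Phi)) (Gq I Phi).
Proof. exact (proj2_sig (constructive_indefinite_description _ (EX HT (@s1 I Phi) (D (@s2 I Phi))))). Qed.
Lemma FamSg1 {I} (Phi : I -> C -> Prop) i c : Fam (@s1 I Phi) (@s2 I Phi) i c -> Phi i c.
Proof. intros [[[i' c'] h] [<- <-]]. exact h. Qed.
Lemma FamSg2 {I} (Phi : I -> C -> Prop) i c : Phi i c -> Fam (@s1 I Phi) (@s2 I Phi) i c.
Proof. intros h. exists (exist _ (i, c) h). split; reflexivity. Qed.

Lemma rx_dec {I J} (u : J -> I) (phi : ipred P I) :
  is_exists (@pb1 _ _ _ u (dU phi)) (D (fun p => dH phi (pb2 p))) (ireidx u phi).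
Proof.
  pose proof (BCE HT _ _ _ _ u (dU phi) pb2 pb1 (PB_is_pullback u (dU phi)) _ _ (d_spec phi)) as HB.
  eapply ex_iso_l; [exact HB|]. apply D_rx.
Qed.
Lemma Fam_pb1 {I J J2} (u : J -> I) (u2 : J2 -> I) (h2 : J2 -> C) j c :
  Fam (@pb1 _ _ _ u u2) (fun p => h2 (pb2 p)) j c -> Fam u2 h2 (u j) c.
Proof. intros [p [<- <-]]. exists (pb2 p). split; auto. symmetry. apply pb_comm. Qed.
Lemma Fam_pb2 {I J J2} (u : J -> I) (u2 : J2 -> I) (h2 : J2 -> C) j c :
  Fam u2 h2 (u j) c -> Fam (@pb1 _ _ _ u u2) (fun p => h2 (pb2 p)) j c.
Proof.
  intros [j2 [e1 <-]]. exists (exist _ (j, j2) (eq_sym e1)). split; reflexivity.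
Qed.

Theorem EQV : ip_equivalent P (rel_real_tripos app Ash).
Proof.
  exists Fq, Gq. split; [split|split; [split|split]].
  - intros I a b Hab. simpl. eapply (ORD1 _ _ _ _ a b); eauto using d_spec.
  - intros I J u a. simpl. split.
    + eapply (ORD1 _ _ _ _ (ireidx u a) (ireidx u a)); [apply d_spec|apply rx_dec|apply le_refl|eauto|].
      intros j c H. apply Fam_pb1 in H. exact H.
    + eapply (ORD1 _ _ _ _ (ireidx u a) (ireidx u a)); [apply rx_dec|apply d_spec|apply le_refl| |eauto].
      intros j c H. apply Fam_pb2. exact H.
  - intros I a b Hab. simpl in Hab. eapply (ORD2 _ _ _ _ _ _ a b); [apply G_spec|apply G_spec|apply FamSg1|apply FamSg2|exact Hab].
  - intros I J u Phi. pose proof (BCE HT _ _ _ _ u s1 pb2 pb1 (PB_is_pullback u (@s1 I Phi)) _ _ (G_spec Phi)) as HB.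
    assert (HB' : is_exists (@pb1 _ _ _ u (@s1 I Phi)) (D (fun p => s2 (pb2 p))) (ireidx u (Gq I Phi))).
    { eapply ex_iso_l; [exact HB|]. apply D_rx. }
    split.
    + eapply (ORD2 _ _ _ _ _ _ (fun j c => Phi (u j) c) (fun j c => Phi (u j) c)); [apply G_spec|exact HB'|apply FamSg1| |].
      intros j c H. apply Fam_pb2. apply FamSg2. exact H.
      destruct (proj2 HG C (fun c => c) (fun c => c) (le_refl _)) as [i [Ai Hi]].
      exists i; split; auto. intros j c h; exists c; split; auto.
    + eapply (ORD2 _ _ _ _ _ _ (fun j c => Phi (u j) c) (fun j c => Phi (u j) c)); [exact HB'|apply G_spec| |apply FamSg2|].
      intros j c H. apply Fam_pb1 in H. apply FamSg1. exact H.
      destruct (proj2 HG C (fun c => c) (fun c => c) (le_refl _)) as [i [Ai Hi]].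
      exists i; split; auto. intros j c h; exists c; split; auto.
  - intros I a. destruct (proj2 HG C (fun c => c) (fun c => c) (le_refl _)) as [i [Ai Hi]].
    assert (Hr : rt_le app Ash (Fq I a) (Fq I a)).
    { exists i; split; auto. intros j c h; exists c; split; auto. }
    split.
    + eapply (ORD2 _ _ _ _ _ _ (Fq I a) (Fq I a)); [apply G_spec|apply d_spec|apply FamSg1|auto|exact Hr].
    + eapply (ORD2 _ _ _ _ _ _ (Fq I a) (Fq I a)); [apply d_spec|apply G_spec|auto|apply FamSg2|exact Hr].
  - intros I Phi. simpl. split.
    + eapply (ORD1 _ _ _ _ (Gq I Phi) (Gq I Phi)); [apply d_spec|apply G_spec|apply le_refl|auto|apply FamSg1].
    + eapply (ORD1 _ _ _ _ (Gq I Phi) (Gq I Phi)); [apply G_spec|apply d_spec|apply le_refl|apply FamSg2|auto].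
Qed.
End EQV.

Theorem ii_to_i : exists (A : Type) (app : A -> A -> option A) (Ash : A -> Prop),
  rel_pca app Ash /\ ip_equivalent P (rel_real_tripos app Ash).
Proof.
  destruct good_pca as [app [Hpca HG]]. exists C, app, Ash. split; auto. apply EQV; auto.
Qed.

End Constr.

Section RT.
Context {A : Type} (app : A -> A -> option A) (Ash : A -> Prop).
Context (Hcl : forall a b c, Ash a -> Ash b -> app a b = Some c -> Ash c).
Context (k s : A) (Hk : Ash k) (Hs : Ash s)
  (Hk2 : forall a b : A, oapp app (oapp app (Some k) (Some a)) (Some b) = Some a)
  (Hs2 : forall a b : A, oapp app (oapp app (Some s) (Some a)) (Some b) <> None)
  (Hs3 : forall a b c : A,
        oapp app (oapp app (oapp app (Some s) (Some a)) (Some b)) (Some c) =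
        oapp app (oapp app (Some a) (Some c)) (oapp app (Some b) (Some c))).

Lemma K1_ex : exists K1 : A -> A, forall a, app k a = Some (K1 a) /\ forall b, app (K1 a) b = Some a.
Proof.
  apply (fchoice (fun a x => app k a = Some x /\ forall b, app x b = Some a)). intros a. pose proof (Hk2 a a) as H. simpl in H.
  destruct (app k a) as [x|] eqn:E; [|discriminate]. exists x. split; auto.
  intros b. pose proof (Hk2 a b) as H2. simpl in H2. rewrite E in H2. exact H2.
Qed.
Lemma S1_ex : exists S1 : A -> A, forall a, app s a = Some (S1 a).
Proof.
  apply (fchoice (fun a x => app s a = Some x)). intros a. pose proof (Hs2 a a) as H. simpl in H.
  destruct (app s a) as [x|] eqn:E; [eauto|]. simpl in H. congruence.
Qed.

Section Comb.
Context (K1 : A -> A) (HK1 : forall a, app k a = Some (K1 a) /\ forall b, app (K1 a) b = Some a).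
Context (S1 : A -> A) (HS1 : forall a, app s a = Some (S1 a)).

Lemma S2_ex : exists S2 : A -> A -> A, forall a b, app (S1 a) b = Some (S2 a b) /\
   forall c, app (S2 a b) c = oapp app (app a c) (app b c).
Proof.
  assert (H : forall p : A * A, exists y, app (S1 (fst p)) (snd p) = Some y /\
     forall c, app y c = oapp app (app (fst p) c) (app (snd p) c)).
  { intros [a b]. simpl. pose proof (Hs2 a b) as H. simpl in H. rewrite HS1 in H. simpl in H.
    destruct (app (S1 a) b) as [y|] eqn:E; [|congruence]. exists y. split; auto.
    intros c. pose proof (Hs3 a b c) as H3. simpl in H3. rewrite HS1 in H3. simpl in H3. rewrite E in H3.
    simpl in H3. exact H3. }
  destruct (fchoice _ H) as [f Hf]. exists (fun a b => f (a, b)). intros a b. apply (Hf (a, b)).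
Qed.

Context (S2 : A -> A -> A) (HS2 : forall a b, app (S1 a) b = Some (S2 a b) /\
   forall c, app (S2 a b) c = oapp app (app a c) (app b c)).

Lemma AK1 a : Ash a -> Ash (K1 a).
Proof. intros; eapply Hcl; [exact Hk|exact H|apply HK1]. Qed.
Lemma AS1 a : Ash a -> Ash (S1 a).
Proof. intros; eapply Hcl; [exact Hs|exact H|apply HS1]. Qed.
Lemma AS2 a b : Ash a -> Ash b -> Ash (S2 a b).
Proof. intros; eapply Hcl; [apply AS1; exact H|exact H0|apply HS2]. Qed.

Lemma K1E a b : app (K1 a) b = Some a.
Proof. apply HK1. Qed.
Lemma S2E a b c : app (S2 a b) c = oapp app (app a c) (app b c).
Proof. apply HS2. Qed.

Definition iA := S2 k k.
Lemma iE c : app iA c = Some c.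
Proof. unfold iA. rewrite S2E. rewrite (proj1 (HK1 c)). simpl. apply K1E. Qed.
Lemma Ai : Ash iA.
Proof. apply AS2; auto. Qed.

Definition cmp (e1 e2 : A) := S2 (K1 e2) e1.
Lemma cmpE e1 e2 a : app (cmp e1 e2) a = oapp app (Some e2) (app e1 a).
Proof. unfold cmp. rewrite S2E. rewrite K1E. reflexivity. Qed.
Lemma Acmp e1 e2 : Ash e1 -> Ash e2 -> Ash (cmp e1 e2).
Proof. intros; apply AS2; auto; apply AK1; auto. Qed.

Definition pa (x y : A) := S2 (S2 iA (K1 x)) (K1 y).
Lemma paE x y f : app (pa x y) f = oapp app (app f x) (Some y).
Proof. unfold pa. rewrite S2E, S2E, iE, K1E, K1E. reflexivity. Qed.
Definition p1 := S2 iA (K1 k).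
Definition p2 := S2 iA (K1 (K1 iA)).
Lemma p1E x y : app p1 (pa x y) = Some x.
Proof. unfold p1. rewrite S2E, iE, K1E. simpl. rewrite paE. rewrite (proj1 (HK1 x)). simpl. apply K1E. Qed.
Lemma p2E x y : app p2 (pa x y) = Some y.
Proof. unfold p2. rewrite S2E, iE, K1E. simpl. rewrite paE. rewrite K1E. simpl. apply iE. Qed.
Lemma Ap1 : Ash p1.
Proof. apply AS2. apply Ai. apply AK1; auto. Qed.
Lemma Ap2 : Ash p2.
Proof. apply AS2. apply Ai. apply AK1; apply AK1; apply Ai. Qed.

Definition tup (r1 r2 : A) :=
  S2 (S2 (K1 s) (S2 (S2 (K1 s) (K1 iA)) (S2 (K1 k) r1))) (S2 (K1 k) r2).
Lemma tupE r1 r2 z x y : app r1 z = Some x -> app r2 z = Some y -> app (tup r1 r2) z = Some (pa x y).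
Proof.
  intros E1 E2. unfold tup.
  repeat (first [rewrite S2E | rewrite K1E | rewrite E1 | rewrite E2 | rewrite HS1 | rewrite (proj1 (HK1 _)) | rewrite (proj1 (HS2 _ _)) ]; simpl).
  reflexivity.
Qed.
Lemma Atup r1 r2 : Ash r1 -> Ash r2 -> Ash (tup r1 r2).
Proof.
  intros. unfold tup. repeat apply AS2; try apply AK1; auto; apply Ai.
Qed.

Definition Q := rel_real_tripos app Ash.

Instance QP : indexed_preorder Q.
Proof.
  split; [|split; [|split; [|split]]].
  - intros I a. exists iA. split. apply Ai. intros i x h. exists x. split; auto. apply iE.
  - intros I a b c [e1 [A1 H1]] [e2 [A2 H2]]. exists (cmp e1 e2). split. apply Acmp; auto.
    intros i x h. destruct (H1 i x h) as [y [Ey hy]]. destruct (H2 i y hy) as [z [Ez hz]].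
    exists z. split; auto. rewrite cmpE, Ey. exact Ez.
  - intros I J u a b [e [Ae He]]. exists e. split; auto. intros j x h. apply (He (u j) x h).
  - intros I a. split; exists iA; (split; [apply Ai|]); intros i x h; exists x; split; auto; apply iE.
  - intros I J K u v a. split; exists iA; (split; [apply Ai|]); intros i x h; exists x; split; auto; apply iE.
Qed.

Lemma rt_refl {I} (a : I -> A -> Prop) : rt_le app Ash a a.
Proof. exists iA. split. apply Ai. intros i x h. exists x. split; auto. apply iE. Qed.

Definition sg {I} (h : I -> A) : ipred Q I := fun i a => a = h i.

Definition Un {J K} (v : K -> J) (phi : K -> A -> Prop) : J -> A -> Prop := fun j a => exists k, v k = j /\ phi k a.
Lemma Un_exists {J K} (v : K -> J) (phi : ipred Q K) : is_exists (P := Q) v phi (Un v phi).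
Proof.
  intros chi. simpl. split.
  - intros [e [Ae He]]. exists e. split; auto. intros kk a h. apply He. exists kk; auto.
  - intros [e [Ae He]]. exists e. split; auto. intros j a [kk [<- h]]. apply He; auto.
Qed.

Lemma sg_prime {I} (h : I -> A) : eprime (P := Q) (sg h).
Proof.
  intros J K u v phi psi Hex Hle.
  assert (H1 : ile (i := Q) psi (Un v phi)).
  { apply (ex_elim _ _ _ _ Hex). simpl. exists iA. split. apply Ai. intros kk a hh. exists a. split. apply iE.
    exists kk; auto. }
  destruct Hle as [e1 [A1 He1]]. destruct H1 as [e2 [A2 He2]].
  set (c := cmp e1 e2).
  destruct (fchoice (fun j kk => v kk = j /\ exists b, app c (h (u j)) = Some b /\ phi kk b)) as [sf Hsf].
  { intros j. destruct (He1 j (h (u j)) eq_refl) as [b1 [E1 hb1]].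
    destruct (He2 j b1 hb1) as [b2 [E2 [kk [hk hb2]]]]. exists kk. split; auto. exists b2. split; auto.
    unfold c. rewrite cmpE, E1. exact E2. }
  exists sf. split. intros j; apply Hsf.
  exists c. split. apply Acmp; auto. simpl. intros j a ->. destruct (Hsf j) as [_ [b [Eb hb]]]. exists b; auto.
Qed.

Definition SgA {I} (pi : I -> A -> Prop) := {p : I * A | pi (fst p) (snd p)}.
Lemma Sg_exists {I} (pi : ipred Q I) :
  is_exists (P := Q) (fun p : SgA pi => fst (proj1_sig p)) (sg (fun p : SgA pi => snd (proj1_sig p))) pi.
Proof.
  intros chi. simpl. split.
  - intros [e [Ae He]]. exists e. split; auto. intros [[i a] hp] x ->. simpl. apply He. exact hp.
  - intros [e [Ae He]]. exists e. split; auto. intros i a hp. apply (He (exist _ (i, a) hp) a eq_refl).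
Qed.

Lemma prime_sg {I} (pi : ipred Q I) : eprime (P := Q) pi -> exists h, iiso (P := Q) pi (sg h).
Proof.
  intros Hp. destruct (Hp I (SgA pi) (fun i => i) _ _ _ (Sg_exists pi)) as [sf [Hsf1 Hsf2]].
  { apply rxi1; reflexivity. }
  exists (fun i => snd (proj1_sig (sf i))). split.
  - destruct Hsf2 as [r [Ar Hr]]. exists r. split; [exact Ar|]. simpl in *. intros i a h. apply (Hr i a h).
  - exists iA. split. apply Ai. simpl. intros i a ->. exists (snd (proj1_sig (sf i))). split. apply iE.
    pose proof (proj2_sig (sf i)) as H. simpl in H. rewrite Hsf1 in H. exact H.
Qed.

Lemma Q_enough : enough_eprimes Q.
Proof.
  intros I phi. exists (SgA phi), (fun p => fst (proj1_sig p)), (sg (fun p : SgA phi => snd (proj1_sig p))).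
  split. apply sg_prime. apply Sg_exists.
Qed.

Definition tq (I : Type) : ipred Q I := sg (fun _ : I => k).
Lemma tq_top I : is_top_in (@eprime Q) (tq I).
Proof.
  split. apply sg_prime. intros a _. exists (K1 k). split. apply AK1; auto.
  intros i x _. exists k. split. apply K1E. reflexivity.
Qed.

Lemma sg_meet {I} (al be : I -> A) : is_meet_in (@eprime Q) (sg al) (sg be) (sg (fun i => pa (al i) (be i))).
Proof.
  split; [apply sg_prime|split; [|split]].
  - exists p1. split. apply Ap1. intros i x ->. exists (al i). split. apply p1E. reflexivity.
  - exists p2. split. apply Ap2. intros i x ->. exists (be i). split. apply p2E. reflexivity.
  - intros x Hx [e1 [A1 H1]] [e2 [A2 H2]].
    exists (tup e1 e2). split. apply Atup; auto.
    intros i a ha.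
    destruct (H1 i a ha) as [y1 [E1 hy1]]. destruct (H2 i a ha) as [y2 [E2 hy2]].
    exists (pa y1 y2). split. apply tupE; auto.
    unfold sg in *. subst. reflexivity.
Qed.

Lemma meet_in_unique {P} {HP : indexed_preorder P} (S : forall I, ipred P I -> Prop) {I} (a b m m' : ipred P I) :
  is_meet_in S a b m -> is_meet_in S a b m' -> iiso m m'.
Proof.
  intros [s1 [h1 [h2 h3]]] [s1' [h1' [h2' h3']]]. split; auto.
Qed.

Lemma Q_fm : sub_finite_meets (@eprime Q).
Proof.
  split; [|split; [|split]].
  - intros I. exists (tq I). apply tq_top.
  - intros I J u t Ht.
    assert (Hi : iiso (P := Q) t (tq I)).
    { split. apply (tq_top I); apply Ht. apply Ht. apply tq_top. }
    split. apply eprime_rx; apply Ht.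
    intros a Ha. eapply le_trans. apply (tq_top J); auto. change (tq J) with (@ireidx Q I J u (tq I)). apply rx_mono. apply Hi.
  - intros I a b Ha Hb. destruct (prime_sg a Ha) as [al Hal]. destruct (prime_sg b Hb) as [be Hbe].
    exists (sg (fun i => pa (al i) (be i))). eapply meet_in_iso; [apply sg_meet| | |apply iiso_refl|apply sg_prime].
    apply iiso_sym; auto. apply iiso_sym; auto.
  - intros I J u a b m Ha Hb Hm. destruct (prime_sg a Ha) as [al Hal]. destruct (prime_sg b Hb) as [be Hbe].
    assert (Hm' : is_meet_in (@eprime Q) a b (sg (fun i => pa (al i) (be i)))).
    { eapply meet_in_iso; [apply sg_meet| | |apply iiso_refl|apply sg_prime]; apply iiso_sym; auto. }
    pose proof (meet_in_unique _ _ _ _ _ Hm Hm') as Hi.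
    eapply meet_in_iso; [apply (sg_meet (fun j => al (u j)) (fun j => be (u j)))| | | |].
    + apply iiso_sym. apply (rx_iso (P := Q) u _ _ Hal).
    + apply iiso_sym. apply (rx_iso (P := Q) u _ _ Hbe).
    + apply iiso_sym. apply (rx_iso (P := Q) u _ _ Hi).
    + apply eprime_rx. apply Hm.
Qed.

Definition dQ : ipred Q A := sg (fun a => a).

Lemma Q_dg : has_discrete_generic_in (@eprime Q).
Proof.
  exists A, dQ. split; [apply sg_prime|split].
  - intros B phi Hphi. destruct (prime_sg phi Hphi) as [h Hh]. exists h. exact Hh.
  - intros K J e f phi He Hphi Hle.
    destruct (prime_sg phi Hphi) as [al [_ [r [Ar Hr]]]].
    destruct Hle as [q [Aq Hq]]. simpl in Hr, Hq.
    destruct (fchoice (fun j w => app r (al j) = Some w /\ phi j w)) as [wf Hwf].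
    { intros j. destruct (Hr j (al j) eq_refl) as [w [h1 h2]]. exists w; auto. }
    exists (fun j => match app q (wf j) with Some y => y | None => al j end).
    intros kk. destruct (Hq kk (wf (e kk)) (proj2 (Hwf (e kk)))) as [y [Ey hy]].
    rewrite Ey. unfold dQ, sg in hy. auto.
Qed.

End Comb.
End RT.

Section Tr.
Context {P Q : IdxPreord} {HP : indexed_preorder P} {HQ : indexed_preorder Q}.
Context (F : forall I, ipred P I -> ipred Q I) (G : forall I, ipred Q I -> ipred P I)
  (HF : pseudonatural F) (HG : pseudonatural G)
  (HGF : forall I a, iiso (G I (F I a)) a) (HFG : forall I b, iiso (F I (G I b)) b).

Lemma Fm {I} (a b : ipred P I) : ile a b -> ile (F I a) (F I b).
Proof. apply HF. Qed.
Lemma Gm {I} (a b : ipred Q I) : ile a b -> ile (G I a) (G I b).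
Proof. apply HG. Qed.
Lemma Fn1 {I J} (u : J -> I) a : ile (F J (ireidx u a)) (ireidx u (F I a)).
Proof. apply HF. Qed.
Lemma Fn2 {I J} (u : J -> I) a : ile (ireidx u (F I a)) (F J (ireidx u a)).
Proof. apply HF. Qed.
Lemma Gn1 {I J} (u : J -> I) a : ile (G J (ireidx u a)) (ireidx u (G I a)).
Proof. apply HG. Qed.
Lemma Gn2 {I J} (u : J -> I) a : ile (ireidx u (G I a)) (G J (ireidx u a)).
Proof. apply HG. Qed.

Lemma F_refl {I} (a b : ipred P I) : ile (F I a) (F I b) -> ile a b.
Proof. intros H. eapply le_trans. apply HGF. eapply le_trans. apply Gm; exact H. apply HGF. Qed.
Lemma G_refl {I} (a b : ipred Q I) : ile (G I a) (G I b) -> ile a b.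
Proof. intros H. eapply le_trans. apply HFG. eapply le_trans. apply Fm; exact H. apply HFG. Qed.
Lemma Fa1 {I} (a : ipred P I) b : ile (F I a) b -> ile a (G I b).
Proof. intros H. eapply le_trans. apply HGF. apply Gm; auto. Qed.
Lemma Fa2 {I} (a : ipred P I) b : ile a (G I b) -> ile (F I a) b.
Proof. intros H. eapply le_trans. apply Fm; exact H. apply HFG. Qed.
Lemma Ga1 {I} (b : ipred Q I) a : ile (G I b) a -> ile b (F I a).
Proof. intros H. eapply le_trans. apply HFG. apply Fm; auto. Qed.
Lemma Ga2 {I} (b : ipred Q I) a : ile b (F I a) -> ile (G I b) a.
Proof. intros H. eapply le_trans. apply Gm; exact H. apply HGF. Qed.

Lemma F_ex {I J} (v : J -> I) phi psi : is_exists v phi psi -> is_exists v (F J phi) (F I psi).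
Proof.
  intros H chi. split; intros Hc.
  - apply Fa2. eapply le_trans; [|apply Gn2].
    eapply le_trans. apply (ex_unit _ _ _ H). apply rx_mono. apply Fa1. exact Hc.
  - apply Fa2. apply (ex_elim _ _ _ _ H). eapply le_trans; [|apply Gn1]. apply Fa1. exact Hc.
Qed.
Lemma G_ex {I J} (v : J -> I) phi psi : is_exists v phi psi -> is_exists v (G J phi) (G I psi).
Proof.
  intros H chi. split; intros Hc.
  - apply Ga2. eapply le_trans; [|apply Fn2].
    eapply le_trans. apply (ex_unit _ _ _ H). apply rx_mono. apply Ga1. exact Hc.
  - apply Ga2. apply (ex_elim _ _ _ _ H). eapply le_trans; [|apply Fn1]. apply Ga1. exact Hc.
Qed.

Lemma F_prime {I} (pi : ipred P I) : eprime pi -> eprime (F I pi).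
Proof.
  intros Hp J K u v phi psi Hex Hle.
  destruct (Hp J K u v (G K phi) (G J psi) (G_ex _ _ _ Hex)) as [s [Hs1 Hs2]].
  { eapply le_trans. apply HGF. apply Gm. eapply le_trans. apply Fn1. exact Hle. }
  exists s. split; auto.
  eapply le_trans. apply Fn2. eapply le_trans. apply Fm; exact Hs2.
  eapply le_trans. apply Fn1. apply rx_mono. apply HFG.
Qed.
Lemma G_prime {I} (pi : ipred Q I) : eprime pi -> eprime (G I pi).
Proof.
  intros Hp J K u v phi psi Hex Hle.
  destruct (Hp J K u v (F K phi) (F J psi) (F_ex _ _ _ Hex)) as [s [Hs1 Hs2]].
  { eapply le_trans. apply HFG. apply Fm. eapply le_trans. apply Gn1. exact Hle. }
  exists s. split; auto.
  eapply le_trans. apply Gn2. eapply le_trans. apply Gm; exact Hs2.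
  eapply le_trans. apply Gn1. apply rx_mono. apply HGF.
Qed.

Lemma transfer_ii :
  enough_eprimes Q -> sub_finite_meets (@eprime Q) -> has_discrete_generic_in (@eprime Q) ->
  enough_eprimes P /\ sub_finite_meets (@eprime P) /\ has_discrete_generic_in (@eprime P).
Proof.
  intros Hen [Q1 [Q2 [Q3 Q4]]] [C [dQ [Hdp [Hdgen Hdd]]]].
  split; [|split; [split; [|split; [|split]]|]].
  - intros I phi. destruct (Hen I (F I phi)) as [J [u [pi [Hpi Hex]]]].
    exists J, u, (G J pi). split. apply G_prime; auto.
    eapply ex_iso_r. apply G_ex; exact Hex. apply HGF.
  - intros I. destruct (Q1 I) as [t [Htp Ht]]. exists (G I t). split. apply G_prime; auto.
    intros a Ha. apply Fa1. apply Ht. apply F_prime; auto.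
  - intros I J u t [Htp Ht].
    assert (HFt : is_top_in (@eprime Q) (F I t)).
    { split. apply F_prime; auto. intros b Hb. apply Ga1. apply Ht. apply G_prime; auto. }
    destruct (Q2 I J u _ HFt) as [_ HFt2].
    split. apply eprime_rx; auto.
    intros a Ha. apply F_refl. eapply le_trans; [|apply Fn2]. apply HFt2. apply F_prime; auto.
  - intros I a b Ha Hb. destruct (Q3 I (F I a) (F I b) (F_prime _ Ha) (F_prime _ Hb)) as [m [Hmp [Hm1 [Hm2 Hm3]]]].
    exists (G I m). split; [apply G_prime; auto|split; [|split]].
    + apply Ga2; auto.
    + apply Ga2; auto.
    + intros x Hx h1 h2. apply Fa1. apply Hm3. apply F_prime; auto. apply Fm; auto. apply Fm; auto.
  - intros I J u a b m Ha Hb [Hmp [Hm1 [Hm2 Hm3]]].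
    assert (HFm : is_meet_in (@eprime Q) (F I a) (F I b) (F I m)).
    { split; [apply F_prime; auto|split; [apply Fm; auto|split; [apply Fm; auto|]]].
      intros y Hy h1 h2. apply Ga1. apply Hm3. apply G_prime; auto. apply Ga2; auto. apply Ga2; auto. }
    destruct (Q4 I J u _ _ _ (F_prime _ Ha) (F_prime _ Hb) HFm) as [_ [_ [_ H4]]].
    split; [apply eprime_rx; auto|split; [apply rx_mono; auto|split; [apply rx_mono; auto|]]].
    intros x Hx h1 h2. apply F_refl. eapply le_trans; [|apply Fn2]. apply H4. apply F_prime; auto.
    eapply le_trans. apply Fm; exact h1. apply Fn1.
    eapply le_trans. apply Fm; exact h2. apply Fn1.
  - exists C, (G C dQ). split; [apply G_prime; auto|split].
    + intros B phi Hphi. destruct (Hdgen B (F B phi) (F_prime _ Hphi)) as [f Hf].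
      exists f. split.
      * eapply le_trans. apply HGF. eapply le_trans; [|apply Gn1]. apply Gm. apply Hf.
      * eapply le_trans. apply Gn2. apply Ga2. apply Hf.
    + intros K J e f phi He Hphi Hle. apply (Hdd K J e f (F J phi) He (F_prime _ Hphi)).
      eapply le_trans. apply Fn2. eapply le_trans. apply Fm; exact Hle.
      eapply le_trans. apply Fn1. apply rx_mono. apply HFG.
Qed.
End Tr.

Theorem theorem9p5 (P : IdxPreord) :
  tripos P ->
  ((exists (A : Type) (app : A -> A -> option A) (Ash : A -> Prop),
       rel_pca app Ash /\ ip_equivalent P (rel_real_tripos app Ash)) <->
   (enough_eprimes P /\
    sub_finite_meets (@eprime P) /\
    has_discrete_generic_in (@eprime P))).
Proof.
  intros HT. split.
  - intros [A [app [Ash [Hpca [F [G [HF [HG [HGF HFG]]]]]]]]].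
    destruct Hpca as [Hcl [k [s [Hk [Hs [Hk2 [Hs2 Hs3]]]]]]].
    destruct (K1_ex app k Hk2) as [K1 HK1].
    destruct (S1_ex app s Hs2) as [S1 HS1].
    destruct (S2_ex app s Hs2 Hs3 S1 HS1) as [S2 HS2].
    pose proof (tpre HT) as HP.
    pose proof (QP app Ash Hcl k s Hk Hs K1 HK1 S1 HS1 S2 HS2) as HQ.
    apply (@transfer_ii P _ HP HQ F G HF HG HGF HFG).
    + exact (Q_enough app Ash Hcl k s Hk Hs K1 HK1 S1 HS1 S2 HS2).
    + exact (Q_fm app Ash Hcl k s Hk Hs K1 HK1 S1 HS1 S2 HS2).
    + exact (Q_dg app Ash Hcl k s Hk Hs K1 HK1 S1 HS1 S2 HS2).
  - intros [Hen [Hfm [C [delta [Hdp [Hdgen Hdd]]]]]].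
    pose proof (tpre HT) as HP.
    destruct Hfm as [Hf1 [Hf2 [Hf3 Hf4]]].
    destruct (Hf3 (C * C)%type (ireidx fst delta) (ireidx snd delta) (eprime_rx _ _ Hdp) (eprime_rx _ _ Hdp)) as [m Hm].
    destruct (Hdgen _ m (proj1 Hm)) as [pr Hpr].
    assert (Hpr' : is_meet_in (@eprime P) (ireidx fst delta) (ireidx snd delta) (ireidx pr delta)).
    { eapply meet_in_iso; [exact Hm|apply iiso_refl|apply iiso_refl|exact Hpr|apply eprime_rx; auto]. }
    destruct (imp_ex HT (ireidx (@fst C C) delta) (ireidx (@snd C C) delta)) as [Gam HGam].
    destruct (Hen _ Gam) as [JR [uR [pi [Hpi Hex]]]].
    destruct (Hdgen _ pi Hpi) as [hR HhR].
    eapply (ii_to_i HT Hen (conj Hf1 (conj Hf2 (conj Hf3 Hf4))) C delta Hdp Hdgen Hdd pr Hpr' Gam HGam JR uR hR).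
    eapply ex_iso_l; eauto.
Qed.
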